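(* Let $S$ be a closed hyperbolic surface and $\gamma \subset S$ a closed geodesic. Let $\alpha,\beta$ be two complete geodesics in the hyperbolic plane $\mathbb{H}^2$ (the universal cover of $S$), both projecting to $\gamma$ under the covering projection, which cross transversely at a point $p$ that projects to a self-intersection of $\gamma$. Let $\epsilon>0$ be such that $8\epsilon$ is less than the length of the shortest nontrivial closed curve on $S$, and let $\alpha_\epsilon,\beta_\epsilon$ be the $\epsilon$-trap for $p$. Then $\operatorname{length}(\alpha_\epsilon) < \operatorname{length}(\gamma) + 4\epsilon$, and similarly $\operatorname{length}(\beta_\epsilon) < \operatorname{length}(\gamma) + 4\epsilon$.
   Context: For two complete geodesics $\alpha,\beta$ in $\mathbb{H}^2$ crossing transversely at $p$ and $\epsilon>0$, $\alpha_\epsilon$ denotes the subset (segment) of $\alpha$ consisting of points lying in the $2\epsilon$-neighborhood of $\beta$, and similarly $\beta_\epsilon$ is the segment of $\beta$ in the $2\epsilon$-neighborhood of $\alpha$. The pair $\alpha_\epsilon,\beta_\epsilon$ is called the $\epsilon$-trap for $p$. *)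

(* Defs.v *)
From Stdlib Require Import Reals Lra.
Open Scope R_scope.

(** Upper half-plane model of H^2: points (x, y) with y > 0. *)
Definition pt := (R * R)%type.
Definition inH (z : pt) : Prop := 0 < snd z.

Definition hdist (z w : pt) : R :=
  let '(x, y) := z in let '(u, v) := w in
  2 * ln ((sqrt ((x - u)^2 + (y - v)^2) + sqrt ((x - u)^2 + (y + v)^2))
          / (2 * sqrt (y * v))).

(** 2x2 real matrices, acting on H^2 by Moebius transformations. *)
Record mat := Mat { ma : R; mb : R; mc : R; md : R }.
Definition det (h : mat) : R := ma h * md h - mb h * mc h.
Definition mid : mat := Mat 1 0 0 1.
Definition mneg_id : mat := Mat (-1) 0 0 (-1).
Definition mmul (g h : mat) : mat :=
  Mat (ma g * ma h + mb g * mc h) (ma g * mb h + mb g * md h)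
      (mc g * ma h + md g * mc h) (mc g * mb h + md g * md h).
(** inverse of a determinant-one matrix *)
Definition minv (h : mat) : mat := Mat (md h) (- mb h) (- mc h) (ma h).

(** z = x + i y  |->  (a z + b) / (c z + d) *)
Definition act (h : mat) (z : pt) : pt :=
  let '(x, y) := z in
  let a := ma h in let b := mb h in let c := mc h in let d := md h in
  let n := (c * x + d)^2 + (c * y)^2 in
  ((a * c * (x^2 + y^2) + (a * d + b * c) * x + b * d) / n,
   (a * d - b * c) * y / n).

(** A nontrivial element of PSL(2,R) represented by h. *)
Definition nontrivial (h : mat) : Prop := h <> mid /\ h <> mneg_id.

(** Gamma is a Fuchsian group uniformizing a closed hyperbolic surface:
    a discrete subgroup of SL(2,R) acting freely (torsion-free) and
    cocompactly on H^2.  The surface is S = H^2 / Gamma. *)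
Definition closed_surface_group (Gamma : mat -> Prop) : Prop :=
  (forall h, Gamma h -> det h = 1) /\
  Gamma mid /\
  (forall g h, Gamma g -> Gamma h -> Gamma (mmul g h)) /\
  (forall h, Gamma h -> Gamma (minv h)) /\
  (exists delta, 0 < delta /\ forall h, Gamma h ->
      Rabs (ma h - 1) < delta -> Rabs (mb h) < delta ->
      Rabs (mc h) < delta -> Rabs (md h - 1) < delta -> h = mid) /\
  (forall h, Gamma h -> nontrivial h -> forall z, inH z -> act h z <> z) /\
  (exists z0 r, inH z0 /\ forall z, inH z ->
      exists h, Gamma h /\ hdist (act h z) z0 <= r).

Definition complete_geodesic (G : pt -> Prop) : Prop :=
  exists c : R -> pt,
    (forall t, inH (c t)) /\
    (forall s t, hdist (c s) (c t) = Rabs (s - t)) /\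
    (forall z, G z <-> exists t, z = c t).

(** The complete geodesic G projects to the closed geodesic determined by
    g in Gamma: G is the axis of a conjugate h g h^-1 (h in Gamma), i.e. a
    complete geodesic mapped onto itself by h g h^-1. *)
Definition projects_to (Gamma : mat -> Prop) (g : mat) (G : pt -> Prop) : Prop :=
  complete_geodesic G /\
  exists h, Gamma h /\
    forall z, inH z -> (G z <-> G (act (mmul h (mmul g (minv h))) z)).

(** L is the length of the closed geodesic of S in the free homotopy class
    of g: the (attained) minimal displacement of g on H^2. *)
Definition transl_length (g : mat) (L : R) : Prop :=
  (forall z, inH z -> L <= hdist z (act g z)) /\
  (exists z, inH z /\ hdist z (act g z) = L).

(** Every nontrivial closed curve on S = H^2/Gamma has length > l
    (i.e. l is less than the length of the shortest one). *)
Definition systole_gt (Gamma : mat -> Prop) (l : R) : Prop :=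
  forall h, Gamma h -> nontrivial h -> forall z, inH z -> l < hdist z (act h z).

Definition trap (alpha beta : pt -> Prop) (eps : R) (x : pt) : Prop :=
  alpha x /\ exists b, beta b /\ hdist x b < 2 * eps.

(** length(A) < bound, for a geodesic segment A: its length is its diameter. *)
Definition seg_length_lt (A : pt -> Prop) (bound : R) : Prop :=
  exists M, M < bound /\ forall x y, A x -> A y -> hdist x y <= M.

(* Main.v *)
Require Import Defs.
From Stdlib Require Import Reals Lra Psatz Classical.
Open Scope R_scope.

Definition Q (z w : pt) : R :=
  let '(x, y) := z in let '(u, v) := w in ((x - u)^2 + (y - v)^2) / (y * v).
Definition K (d : R) : R := exp d + exp (- d) - 2.

Lemma Rdiv_le_0_compat a b : 0 <= a -> 0 < b -> 0 <= a / b.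
Proof. intros. unfold Rdiv. apply Rmult_le_pos; auto. left; apply Rinv_0_lt_compat; auto. Qed.

Lemma exp_2ln (W : R) : 0 < W -> exp (2 * ln W) = W * W.
Proof. intros. replace (2 * ln W) with (ln W + ln W) by ring.
  rewrite exp_plus, exp_ln; auto. Qed.

Lemma hdist_K z w : inH z -> inH w -> K (hdist z w) = Q z w.
Proof.
  destruct z as [x y], w as [u v]; unfold inH, hdist, K, Q; cbv beta iota zeta; simpl fst; simpl snd; intros Hy Hv.
  assert (HB : (x - u)^2 + (y + v)^2 = ((x - u)^2 + (y - v)^2) + 4 * (y * v)) by ring.
  rewrite HB.
  assert (Hyv : 0 < y * v) by nra.
  assert (HA : 0 <= (x - u)^2 + (y - v)^2) by (pose proof (pow2_ge_0 (x-u)); pose proof (pow2_ge_0 (y-v)); lra).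
  generalize ((x - u)^2 + (y - v)^2) HA; intros A HA0.
  assert (Ha := sqrt_sqrt A HA0).
  assert (Hb := sqrt_sqrt (A + 4 * (y * v)) ltac:(lra)).
  assert (Hw := sqrt_sqrt (y * v) ltac:(lra)).
  assert (a0 := sqrt_pos A).
  assert (b0 : 0 < sqrt (A + 4 * (y * v))) by (apply sqrt_lt_R0; lra).
  assert (w0 : 0 < sqrt (y * v)) by (apply sqrt_lt_R0; lra).
  revert Ha Hb Hw a0 b0 w0.
  generalize (sqrt A) (sqrt (A + 4 * (y * v))) (sqrt (y * v)); intros a b w Ha Hb Hw a0 b0 w0.
  assert (W0 : 0 < (a + b) / (2 * w)) by (apply Rdiv_lt_0_compat; lra).
  rewrite exp_Ropp, exp_2ln by exact W0.
  rewrite <- Hw, <- Ha.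
  assert (E : b * b = a * a + 4 * (w * w)) by lra.
  field_simplify; try nra.
  replace (a ^ 4 + 4 * a ^ 3 * b + 6 * a ^ 2 * b ^ 2 - 8 * a ^ 2 * w ^ 2 +
   4 * a * b ^ 3 - 16 * a * b * w ^ 2 + b ^ 4 - 8 * b ^ 2 * w ^ 2 +
   16 * w ^ 4) with (((a+b)^2 - 4 * w^2)^2) by ring.
  replace ((a+b)^2 - 4 * w^2) with (2 * a * (a + b)) by (transitivity (a*a+2*a*b+b*b-4*(w*w)); [lra | ring]).
  field. split; [lra|]. assert (0 < w*(a+b)) by nra. apply Rgt_not_eq. nra.
Qed.

Lemma hdist_nonneg z w : inH z -> inH w -> 0 <= hdist z w.
Proof.
  destruct z as [x y], w as [u v]; unfold inH, hdist; cbv beta iota zeta; simpl fst; simpl snd; intros Hy Hv.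
  assert (HB : (x - u)^2 + (y + v)^2 = ((x - u)^2 + (y - v)^2) + 4 * (y * v)) by ring.
  rewrite HB.
  assert (Hyv : 0 < y * v) by nra.
  assert (HA : 0 <= (x - u)^2 + (y - v)^2) by (pose proof (pow2_ge_0 (x-u)); pose proof (pow2_ge_0 (y-v)); lra).
  generalize ((x - u)^2 + (y - v)^2) HA; intros A HA0.
  assert (Hb := sqrt_sqrt (A + 4 * (y * v)) ltac:(lra)).
  assert (Hw := sqrt_sqrt (y * v) ltac:(lra)).
  assert (a0 := sqrt_pos A).
  assert (b0 : 0 < sqrt (A + 4 * (y * v))) by (apply sqrt_lt_R0; lra).
  assert (w0 : 0 < sqrt (y * v)) by (apply sqrt_lt_R0; lra).
  revert Hb Hw a0 b0 w0.
  generalize (sqrt A) (sqrt (A + 4 * (y * v))) (sqrt (y * v)); intros a b w Hb Hw a0 b0 w0.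
  assert (b >= 2 * w) by nra.
  assert (1 <= (a + b) / (2 * w)).
  { apply (Rmult_le_reg_r (2 * w)); [lra|]. unfold Rdiv. rewrite Rmult_assoc, Rinv_l; lra. }
  assert (0 <= ln ((a + b) / (2 * w))).
  { rewrite <- ln_1. destruct (Req_dec 1 ((a + b) / (2 * w))) as [e|ne]; [rewrite <- e; lra|].
    left. apply ln_increasing; lra. }
  lra.
Qed.

Lemma K_even d : K (- d) = K d.
Proof. unfold K. rewrite Ropp_involutive. ring. Qed.

Lemma K_mono a b : 0 <= a -> a < b -> K a < K b.
Proof.
  intros Ha Hab. unfold K. rewrite !exp_Ropp.
  assert (ea : 0 < exp a) by apply exp_pos.
  assert (eb : exp a < exp b) by (apply exp_increasing; lra).
  assert (eab : 1 < exp a * exp b).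
  { rewrite <- exp_plus. rewrite <- exp_0. apply exp_increasing. lra. }
  apply Rminus_gt_0_lt.
  replace (exp b + / exp b - 2 - (exp a + / exp a - 2)) with
     ((exp b - exp a) * (exp a * exp b - 1) / (exp a * exp b)) by (field; lra).
  apply Rdiv_lt_0_compat; nra.
Qed.

Lemma K_le_inv a b : 0 <= a -> 0 <= b -> K a <= K b -> a <= b.
Proof. intros. destruct (Rle_lt_dec a b); auto. pose proof (K_mono b a); lra. Qed.
Lemma K_lt_inv a b : 0 <= a -> 0 <= b -> K a < K b -> a < b.
Proof. intros. destruct (Rlt_le_dec a b); auto. destruct (Req_dec a b). subst; lra. pose proof (K_mono b a); lra. Qed.
Lemma K_inj a b : 0 <= a -> 0 <= b -> K a = K b -> a = b.
Proof. intros. apply Rle_antisym; apply K_le_inv; lra. Qed.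
Lemma K_abs d : K (Rabs d) = K d.
Proof. unfold Rabs; destruct (Rcase_abs d); auto using K_even. Qed.

Lemma hdist_of_Q z w t : inH z -> inH w -> 0 <= t -> Q z w = K t -> hdist z w = t.
Proof. intros. apply K_inj; auto using hdist_nonneg. rewrite hdist_K; auto. Qed.
Lemma hdist_lt_Q z w t : inH z -> inH w -> 0 <= t -> (hdist z w < t <-> Q z w < K t).
Proof. intros. rewrite <- hdist_K by auto. split; intro.
  apply K_mono; auto using hdist_nonneg. apply K_lt_inv; auto using hdist_nonneg. Qed.
Lemma hdist_le_Q z w t : inH z -> inH w -> 0 <= t -> (t <= hdist z w <-> K t <= Q z w).
Proof. intros. rewrite <- hdist_K by auto. split; intro.
  destruct H2. left; apply K_mono; auto. rewrite H2; lra.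
  apply K_le_inv; auto using hdist_nonneg. Qed.

Lemma sq_pos x : x <> 0 -> 0 < x ^ 2.
Proof. intros. destruct (Rtotal_order x 0) as [h|[h|h]]; [nra|tauto|nra]. Qed.

Lemma n_pos (X : mat) x y : det X = 1 -> 0 < y -> 0 < (mc X * x + md X)^2 + (mc X * y)^2.
Proof.
  destruct X as [a b c d]; unfold det; simpl; intros H Hy.
  destruct (Req_dec c 0).
  - subst. assert (d <> 0) by (intro; subst; lra).
    pose proof (sq_pos d H0). simpl. nra.
  - assert (0 < (c*y)^2) by (apply sq_pos; intro; apply H0; nra ).
    pose proof (pow2_ge_0 (c * x + d)). lra.
Qed.

Lemma act_inH X z : det X = 1 -> inH z -> inH (act X z).
Proof.
  destruct z as [x y]; intros H Hy; unfold inH in *; simpl in Hy.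
  pose proof (n_pos X x y H Hy).
  destruct X as [a b c d]; unfold det in H; simpl in *.
  rewrite H. apply Rdiv_lt_0_compat; lra.
Qed.

Lemma aux_S2 : forall a' b' c' d' c d x y, (c' * x + d') * (c' * x + d') + c' * y * (c' * y) <> 0 -> ((c *
    ((a' * c' * (x * (x * 1) + y * (y * 1)) + (a' * d' + b' * c') * x +
      b' * d') /
     ((c' * x + d') * ((c' * x + d') * 1) + c' * y * (c' * y * 1))) +
    d) *
   ((c *
     ((a' * c' * (x * (x * 1) + y * (y * 1)) + (a' * d' + b' * c') * x +
       b' * d') /
      ((c' * x + d') * ((c' * x + d') * 1) + c' * y * (c' * y * 1))) +
     d) *
    1) +
   c *
   ((a' * d' - b' * c') * y /
    ((c' * x + d') * ((c' * x + d') * 1) + c' * y * (c' * y * 1))) *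
   (c *
    ((a' * d' - b' * c') * y /
     ((c' * x + d') * ((c' * x + d') * 1) + c' * y * (c' * y * 1))) *
    1)) *
  (((c' * x + d') * ((c' * x + d') * 1) + c' * y * (c' * y * 1)) *
   ((c' * x + d') * ((c' * x + d') * 1) + c' * y * (c' * y * 1))) =
  (c * (a' * c' * (x * x + y * y) + (a' * d' + b' * c') * x + b' * d') +
   d * ((c' * x + d') * (c' * x + d') + c' * y * (c' * y))) *
  (c * (a' * c' * (x * x + y * y) + (a' * d' + b' * c') * x + b' * d') +
   d * ((c' * x + d') * (c' * x + d') + c' * y * (c' * y))) +
  c * ((a' * d' - b' * c') * y) * (c * ((a' * d' - b' * c') * y)).

Proof. intros. field. auto. Qed.

Lemma act_mmul X Y z : det X = 1 -> det Y = 1 -> inH z ->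
  act (mmul X Y) z = act X (act Y z).
Proof.
  intros HX HY Hz. assert (Hz' := act_inH Y z HY Hz).
  destruct z as [x y]. unfold inH in Hz; simpl in Hz.
  pose proof (n_pos Y x y HY Hz) as nY.
  remember (act Y (x, y)) as w eqn:Ew. destruct w as [x1 y1].
  unfold inH in Hz'; simpl in Hz'.
  pose proof (n_pos X x1 y1 HX Hz') as nX.
  destruct X as [a b c d], Y as [a' b' c' d']; unfold det in *; simpl in *.
  injection Ew; intros E2 E1.
  rewrite E1, E2 in nX |- *.
  assert (HXY : det (mmul (Mat a b c d) (Mat a' b' c' d')) = 1)
    by (unfold det, mmul; simpl; nra).
  pose proof (n_pos _ x y HXY Hz) as nXY. simpl in nXY.
  set (NY := (c' * x + d') * ((c' * x + d') * 1) + c' * y * (c' * y * 1)) in *.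
  assert (NY0 : NY <> 0) by lra.
  assert (S1 : (c' * x + d') * (c' * x + d') + c' * y * (c' * y) <> 0)
    by (apply Rgt_not_eq; apply (Rlt_le_trans _ _ _ nY); right; unfold NY; ring).
  assert (S3 : ((c * a' + d * c') * x + (c * b' + d * d')) *
  ((c * a' + d * c') * x + (c * b' + d * d')) +
  (c * a' + d * c') * y * ((c * a' + d * c') * y) <> 0)
    by (apply Rgt_not_eq; apply (Rlt_le_trans _ _ _ nXY); right; ring).
  assert (S2 : (c * (a' * c' * (x * x + y * y) + (a' * d' + b' * c') * x + b' * d') +
   d * ((c' * x + d') * (c' * x + d') + c' * y * (c' * y))) *
  (c * (a' * c' * (x * x + y * y) + (a' * d' + b' * c') * x + b' * d') +
   d * ((c' * x + d') * (c' * x + d') + c' * y * (c' * y))) +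
  c * ((a' * d' - b' * c') * y) * (c * ((a' * d' - b' * c') * y)) <> 0).
  { apply Rgt_not_eq. assert (P : 0 < NY * NY) by nra.
    pose proof (Rmult_lt_0_compat _ _ nX P) as Q0. unfold NY in Q0.
    rewrite aux_S2 in Q0 by exact S1. exact Q0. }
  unfold NY in *. clear Ew nX NY0. clear NY. f_equal.
  - field. tauto.
  - field. tauto.
Qed.

Lemma Q_act X z w : det X = 1 -> inH z -> inH w -> Q (act X z) (act X w) = Q z w.
Proof.
  destruct z as [x y], w as [u v]; unfold inH; simpl; intros H Hy Hv.
  pose proof (n_pos X x y H Hy) as n1. pose proof (n_pos X u v H Hv) as n2.
  destruct X as [a b c d]; unfold det in H; simpl in *.
  field. repeat split; try lra.
Qed.

Lemma hdist_act X z w : det X = 1 -> inH z -> inH w -> hdist (act X z) (act X w) = hdist z w.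
Proof.
  intros. apply hdist_of_Q; auto using act_inH, hdist_nonneg.
  rewrite Q_act, hdist_K; auto.
Qed.

Lemma det_mmul X Y : det (mmul X Y) = det X * det Y.
Proof. destruct X, Y; unfold det, mmul; simpl; ring. Qed.
Lemma det_minv X : det (minv X) = det X.
Proof. destruct X; unfold det, minv; simpl; ring. Qed.
Lemma mmul_minv_r X : det X = 1 -> mmul X (minv X) = mid.
Proof. destruct X as [a b c d]; unfold det, mmul, minv, mid; simpl; intros; f_equal; lra. Qed.
Lemma mmul_minv_l X : det X = 1 -> mmul (minv X) X = mid.
Proof. destruct X as [a b c d]; unfold det, mmul, minv, mid; simpl; intros; f_equal; lra. Qed.
Lemma act_mid z : act mid z = z.
Proof. destruct z as [x y]; unfold act, mid; simpl. f_equal; field. Qed.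
Lemma act_mneg z : act mneg_id z = z.
Proof. destruct z as [x y]; unfold act, mneg_id; simpl. f_equal; field. Qed.
Lemma act_minv_l X z : det X = 1 -> inH z -> act (minv X) (act X z) = z.
Proof. intros. rewrite <- act_mmul; auto. rewrite mmul_minv_l; auto. apply act_mid.
  rewrite det_minv; auto. Qed.
Lemma act_minv_r X z : det X = 1 -> inH z -> act X (act (minv X) z) = z.
Proof. intros. rewrite <- act_mmul; auto. rewrite mmul_minv_r; auto. apply act_mid.
  rewrite det_minv; auto. Qed.

Definition A (t : R) : pt := (0, exp t).
Lemma A_inH t : inH (A t).
Proof. unfold inH, A; simpl. apply exp_pos. Qed.

Lemma Q_A s t : Q (A s) (A t) = K (s - t).
Proof.
  unfold Q, A, K.
  pose proof (exp_pos s). pose proof (exp_pos t).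
  assert (e1 : exp (s - t) = exp s / exp t) by (unfold Rminus; rewrite exp_plus, exp_Ropp; field; lra).
  assert (e2 : exp (- (s - t)) = exp t / exp s) by (replace (- (s - t)) with (t + - s) by ring; rewrite exp_plus, exp_Ropp; field; lra).
  rewrite e1, e2. field. lra.
Qed.
Lemma hdist_A s t : hdist (A s) (A t) = Rabs (s - t).
Proof. apply hdist_of_Q; auto using A_inH, Rabs_pos. rewrite K_abs. apply Q_A. Qed.

Definition rot (C S : R) : mat := Mat C S (- S) C.
Lemma det_rot C S : C^2 + S^2 = 1 -> det (rot C S) = 1.
Proof. unfold det, rot; simpl; intros; lra. Qed.
Lemma minv_rot C S : minv (rot C S) = rot C (- S).
Proof. unfold minv, rot; simpl. f_equal; ring. Qed.
Lemma rot_i C S : C^2 + S^2 = 1 -> act (rot C S) (0, 1) = (0, 1).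
Proof. intros H; unfold act, rot; simpl. simpl in H.
  replace ((- S * 0 + C) * ((- S * 0 + C) * 1) + - S * 1 * (- S * 1 * 1)) with 1 by lra.
  f_equal; field_simplify; lra. Qed.

Lemma rot_to_axis x y : 0 < y -> exists C S, C^2 + S^2 = 1 /\ fst (act (rot C S) (x, y)) = 0.
Proof.
  intros Hy. destruct (Req_dec x 0) as [Hx|Hx].
  - exists 1, 0. split; [simpl; ring|]. unfold act, rot; simpl. subst. field.
  - set (B := x^2 + y^2 - 1).
    assert (HD : 0 <= B^2 + 4 * x^2) by (pose proof (pow2_ge_0 B); pose proof (pow2_ge_0 x); lra).
    set (D := sqrt (B^2 + 4 * x^2)).
    assert (HD2 : D * D = B^2 + 4 * x^2) by (apply sqrt_sqrt; lra).
    set (t := (- B + D) / (2 * x)).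
    assert (Ht : x * t^2 + B * t - x = 0).
    { unfold t. transitivity ((D*D - B^2 - 4*x^2)/(4*x)). field. auto.
      rewrite HD2. field. auto. }
    assert (H1 : 0 < 1 + t^2) by (pose proof (pow2_ge_0 t); lra).
    set (w := sqrt (1 + t^2)).
    assert (Hw : w * w = 1 + t^2) by (apply sqrt_sqrt; lra).
    assert (w0 : 0 < w) by (apply sqrt_lt_R0; lra).
    exists (1 / w), (t / w). split.
    + field_simplify; try lra. replace (w^2) with (w*w) by ring. rewrite Hw. field. lra.
    + unfold act, rot; simpl.
      assert (Hn : 0 < (- (t / w) * x + 1 / w) * ((- (t / w) * x + 1 / w) * 1) + - (t / w) * y * (- (t / w) * y * 1)).
      { pose proof (n_pos (rot (1/w) (t/w)) x y). unfold rot in H; simpl in H. apply H; auto.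
        unfold det; simpl. field_simplify; try lra. replace (w^2) with (w*w) by ring. rewrite Hw. field. lra. }
      apply Rmult_eq_reg_r with (r := (- (t / w) * x + 1 / w) * ((- (t / w) * x + 1 / w) * 1) + - (t / w) * y * (- (t / w) * y * 1)); [|lra].
      rewrite Rmult_0_l. unfold Rdiv at 1. rewrite Rmult_assoc, Rinv_l by lra. rewrite Rmult_1_r.
      apply Rmult_eq_reg_r with (r := w * w); [|nra]. rewrite Rmult_0_l.
      replace (-0) with 0 by ring.
      transitivity (- (x * t^2 + B * t - x)); [unfold B; field; lra | rewrite Ht; ring].
Qed.

Lemma exp_Rabs_cases l : (exp (Rabs l) = exp l /\ 0 <= l) \/ (exp (Rabs l) = / exp l /\ l < 0).
Proof. unfold Rabs; destruct (Rcase_abs l); [right; rewrite exp_Ropp; auto | left; split; auto; lra]. Qed.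

Lemma tri_core l u v : 0 < v -> hdist (A l) (u, v) <= Rabs l + hdist (A 0) (u, v).
Proof.
  intros Hv. assert (Hw : inH (u, v)) by (unfold inH; simpl; lra).
  set (r := hdist (A 0) (u, v)).
  assert (r0 : 0 <= r) by (apply hdist_nonneg; auto using A_inH).
  assert (Hr : K r = Q (A 0) (u, v)) by (apply hdist_K; auto using A_inH).
  apply K_le_inv; [apply hdist_nonneg; auto using A_inH | pose proof (Rabs_pos l); lra |].
  rewrite hdist_K by auto using A_inH.
  revert Hr. unfold K, Q, A. rewrite exp_0, !exp_Ropp, exp_plus.
  assert (rho0 := exp_pos r). assert (rho1 : 1 <= exp r) by (rewrite <- exp_0; destruct r0; [left; apply exp_increasing; auto| subst; rewrite H; lra]).
  generalize (exp r) rho0 rho1; intros rho rho0' rho1' Hr.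
  assert (Hu := pow2_ge_0 u).
  assert (E1 : u^2 + v^2 + 1 = v * (rho + / rho)).
  { assert (Hr' : (rho + / rho - 2) * v = (0-u)^2 + (1-v)^2) by (rewrite Hr; field; lra).
    replace ((0-u)^2) with (u^2) in Hr' by ring. nra. }
  assert (Hvr : (v - rho) * (v - / rho) <= 0).
  { replace ((v - rho) * (v - / rho)) with (v^2 + 1 - v * (rho + / rho)) by (field; lra). lra. }
  assert (irho : / rho <= rho) by (apply (Rmult_le_reg_r rho); [lra|]; rewrite Rinv_l by lra; nra).
  assert (irho0 : 0 < / rho) by (apply Rinv_0_lt_compat; lra).
  assert (vlo : / rho <= v) by (destruct (Rle_lt_dec (/ rho) v); auto; nra).
  assert (vhi : v <= rho) by (destruct (Rle_lt_dec v rho); auto; nra).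
  assert (Y0 := exp_pos l).
  assert (Hu2 : (0 - u)^2 = v * (rho + / rho) - v^2 - 1) by (replace ((0-u)^2) with (u^2) by ring; lra).
  assert (vr1 : 1 <= v * rho) by (apply (Rmult_le_compat_r rho) in vlo; [rewrite Rinv_l in vlo; lra | lra]).
  assert (vr2 : v * / rho <= 1) by (apply (Rmult_le_compat_r (/ rho)) in vhi; [rewrite Rinv_r in vhi; lra | lra]).
  destruct (exp_Rabs_cases l) as [[e hl]|[e hl]]; rewrite e.
  - assert (Y1 : 1 <= exp l) by (rewrite <- exp_0; destruct hl; [left; apply exp_increasing; auto| subst; lra]).
    generalize (exp l) Y0 Y1; intros Y Y0' Y1'. rewrite Hu2.
    apply Rminus_le. replace (((v * (rho + / rho) - v ^ 2 - 1) + (Y - v) ^ 2) / (Y * v) - (Y * rho + / (Y * rho) - 2))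
      with (- ((Y * Y - 1) * (v * rho - 1) / (Y * v))) by (field; lra).
    assert (0 <= (Y * Y - 1) * (v * rho - 1) / (Y * v)); [|lra].
    apply Rdiv_le_0_compat; [apply Rmult_le_pos; nra | nra].
  - assert (Y1 : exp l < 1) by (rewrite <- exp_0; apply exp_increasing; auto).
    generalize (exp l) Y0 Y1; intros Y Y0' Y1'. rewrite Hu2.
    apply Rminus_le. replace (((v * (rho + / rho) - v ^ 2 - 1) + (Y - v) ^ 2) / (Y * v) - (/ Y * rho + / (/ Y * rho) - 2))
      with (- ((1 - Y * Y) * (1 - v * / rho) / (Y * v))) by (field; lra).
    assert (0 <= (1 - Y * Y) * (1 - v * / rho) / (Y * v)); [|lra].
    apply Rdiv_le_0_compat; [apply Rmult_le_pos; nra | nra].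
Qed.

Definition Mi (x y : R) : mat := Mat (1 / sqrt y) (- x / sqrt y) 0 (sqrt y).
Lemma det_Mi x y : 0 < y -> det (Mi x y) = 1.
Proof. intros. unfold det, Mi; simpl. assert (0 < sqrt y) by (apply sqrt_lt_R0; auto). field. lra. Qed.
Lemma act_Mi x y u v : 0 < y -> act (Mi x y) (u, v) = ((u - x) / y, v / y).
Proof.
  intros. unfold act, Mi; simpl. assert (0 < sqrt y) by (apply sqrt_lt_R0; auto).
  assert (sqrt y * sqrt y = y) by (apply sqrt_sqrt; lra).
  f_equal.
  - replace ((0 * u + sqrt y) * ((0 * u + sqrt y) * 1) + 0 * v * (0 * v * 1)) with y by (transitivity (sqrt y * sqrt y); [symmetry; exact H1 | ring]).
    field; lra.
  - replace ((0 * u + sqrt y) * ((0 * u + sqrt y) * 1) + 0 * v * (0 * v * 1)) with y by (transitivity (sqrt y * sqrt y); [symmetry; exact H1 | ring]).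
    field; lra.
Qed.

Lemma normalize2 m z : inH m -> inH z -> exists N, det N = 1 /\ act N m = (0, 1) /\ fst (act N z) = 0.
Proof.
  destruct m as [x y], z as [u v]; intros Hy Hv; unfold inH in Hy, Hv; simpl in Hy, Hv.
  assert (Hv' : 0 < v / y) by (apply Rdiv_lt_0_compat; auto).
  destruct (rot_to_axis ((u - x) / y) (v / y) Hv') as [C [S [HCS HR]]].
  exists (mmul (rot C S) (Mi x y)). split; [rewrite det_mmul, det_rot, det_Mi; auto; ring|].
  split.
  - rewrite act_mmul; [|apply det_rot; auto|apply det_Mi; auto|unfold inH; simpl; auto].
    rewrite act_Mi by auto.
    replace ((x - x) / y) with 0 by (field; lra). replace (y / y) with 1 by (field; lra). apply rot_i; auto.
  - rewrite act_mmul; [|apply det_rot; auto|apply det_Mi; auto|unfold inH; simpl; auto].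
    rewrite act_Mi by auto. exact HR.
Qed.

Lemma hdist_tri z m w : inH z -> inH m -> inH w -> hdist z w <= hdist z m + hdist m w.
Proof.
  intros Hz Hm Hw. destruct (normalize2 m z Hm Hz) as [N [HN [Hm' Hz']]].
  rewrite <- (hdist_act N z w), <- (hdist_act N z m), <- (hdist_act N m w) by auto.
  rewrite Hm'. assert (Hz2 := act_inH N z HN Hz). assert (Hw2 := act_inH N w HN Hw).
  destruct (act N z) as [x0 Y]. simpl in Hz'. subst x0. destruct (act N w) as [u v].
  unfold inH in Hz2, Hw2; simpl in Hz2, Hw2.
  replace (0, Y) with (A (ln Y)) by (unfold A; rewrite exp_ln; auto).
  replace (0, 1) with (A 0) by (unfold A; rewrite exp_0; auto).
  rewrite hdist_A. replace (ln Y - 0) with (ln Y) by ring. apply tri_core; auto.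
Qed.

Lemma rot_mul_J C S : mmul (rot 0 1) (rot C S) = rot (- S) C.
Proof. unfold mmul, rot; simpl; f_equal; ring. Qed.
Lemma act_J Y : 0 < Y -> act (rot 0 1) (0, Y) = (0, / Y).
Proof. intros. unfold act, rot; simpl. f_equal; field; lra. Qed.

Lemma rot_axis_up x y : 0 < y -> exists C S Y, C^2 + S^2 = 1 /\ 1 <= Y /\ act (rot C S) (x, y) = (0, Y).
Proof.
  intros Hy. destruct (rot_to_axis x y Hy) as [C [S [HCS H0]]].
  assert (Hin : inH (act (rot C S) (x, y))) by (apply act_inH; auto using det_rot).
  destruct (act (rot C S) (x, y)) as [x0 Y0] eqn:E. simpl in H0. subst x0.
  unfold inH in Hin; simpl in Hin.
  destruct (Rle_lt_dec 1 Y0).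
  - exists C, S, Y0. auto.
  - exists (- S), C, (/ Y0). split; [lra|]. split.
    + rewrite <- Rinv_1. apply Rinv_le_contravar; lra.
    + rewrite <- rot_mul_J, act_mmul, E, act_J; auto.
      all: try (apply det_rot; auto).
      all: try (unfold det, rot; simpl; ring).
Qed.

Definition isom_line (c : R -> pt) : Prop :=
  (forall t, inH (c t)) /\ (forall s t, hdist (c s) (c t) = Rabs (s - t)).

Lemma Q_line c s t : isom_line c -> Q (c s) (c t) = K (s - t).
Proof. intros [H1 H2]. rewrite <- hdist_K by auto. rewrite H2. apply K_abs. Qed.

Lemma axis_line c : isom_line c -> c 0 = A 0 -> c 1 = A 1 -> forall t, c t = A t.
Proof.
  intros Hc H0 H1 t.
  pose proof (Q_line c 0 t Hc) as E0. pose proof (Q_line c 1 t Hc) as E1.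
  rewrite H0 in E0. rewrite H1 in E1.
  pose proof (proj1 Hc t) as Ht.
  destruct (c t) as [x y]. unfold inH in Ht; simpl in Ht.
  unfold Q, A, K in *. rewrite exp_0 in E0.
  assert (ee : 1 < exp 1) by (pose proof (exp_increasing 0 1 ltac:(lra)) as h; rewrite exp_0 in h; lra).
  assert (eT := exp_pos t).
  replace (0 - t) with (- t) in E0 by ring. rewrite Ropp_involutive, exp_Ropp in E0.
  replace (exp (1 - t)) with (exp 1 / exp t) in E1 by (unfold Rminus; rewrite exp_plus, exp_Ropp; field; lra).
  replace (exp (- (1 - t))) with (exp t / exp 1) in E1 by (replace (- (1 - t)) with (t + - (1)) by ring; rewrite exp_plus, exp_Ropp; field; lra).
  revert E0 E1 ee eT. generalize (exp 1) (exp t). intros e T E0 E1 ee eT.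
  assert (F0 : x^2 + y^2 + 1 = y * (T + / T)).
  { apply (Rmult_eq_reg_r (/ y)); [|apply Rinv_neq_0_compat; lra].
    transitivity (((0 - x) ^ 2 + (1 - y) ^ 2) / (1 * y) + 2); [field; lra|]. rewrite E0. field; lra. }
  assert (F1 : x^2 + y^2 + e^2 = y * (T + e^2 / T)).
  { apply (Rmult_eq_reg_r (/ (e * y))); [|apply Rinv_neq_0_compat; nra].
    transitivity (((0 - x) ^ 2 + (e - y) ^ 2) / (e * y) + 2); [field; lra|]. rewrite E1. field; lra. }
  assert (Hy : y = T).
  { assert (G : (e^2 - 1) * (1 - y / T) = 0).
    { replace ((e^2 - 1) * (1 - y / T)) with ((x^2 + y^2 + e^2 - y * (T + e^2 / T)) - (x^2 + y^2 + 1 - y * (T + / T))) by (field; lra).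
      rewrite F0, F1. ring. }
    apply Rmult_integral in G. destruct G as [G|G]; [nra|].
    apply (Rmult_eq_reg_r (/ T)); [|apply Rinv_neq_0_compat; lra].
    rewrite Rinv_r by lra. unfold Rdiv in G. lra. }
  subst y. assert (Hx : x^2 = 0) by (assert (T * (T + / T) = T^2 + 1) by (field; lra); lra).
  assert (x = 0) by (nra).
  subst. reflexivity.
Qed.

Lemma isom_line_act N c : det N = 1 -> isom_line c -> isom_line (fun t => act N (c t)).
Proof. intros HN [H1 H2]. split; intros; [apply act_inH; auto | rewrite hdist_act; auto]. Qed.

Lemma A0 : A 0 = (0, 1).
Proof. unfold A; rewrite exp_0; auto. Qed.

Lemma classify c : isom_line c -> c 0 = A 0 ->
  exists C S, C^2 + S^2 = 1 /\ forall t, c t = act (rot C S) (A t).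
Proof.
  intros Hc H0.
  pose proof (proj1 Hc 1) as H1. destruct (c 1) as [x y] eqn:E1. unfold inH in H1; simpl in H1.
  destruct (rot_axis_up x y H1) as [C [S [Y [HCS [HY HR]]]]].
  set (c' := fun t => act (rot C S) (c t)).
  assert (Hc' : isom_line c') by (apply isom_line_act; auto using det_rot).
  assert (c'0 : c' 0 = A 0) by (unfold c'; rewrite H0, A0; apply rot_i; auto).
  assert (c'1 : c' 1 = (0, Y)) by (unfold c'; rewrite E1; auto).
  assert (HYA : (0, Y) = A (ln Y)) by (unfold A; rewrite exp_ln; auto; lra).
  assert (lY : 0 <= ln Y) by (rewrite <- ln_1; destruct HY; [left; apply ln_increasing; lra| subst; lra]).
  assert (d1 := proj2 Hc' 0 1). rewrite c'0, c'1, HYA, hdist_A in d1.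
  replace (Rabs (0 - 1)) with 1 in d1 by (rewrite Rabs_left; lra).
  rewrite Rabs_left1 in d1 by lra.
  assert (c'1' : c' 1 = A 1) by (rewrite c'1, HYA; f_equal; lra).
  assert (Hall := axis_line c' Hc' c'0 c'1').
  exists C, (- S). split; [lra|]. intro t.
  rewrite <- Hall. unfold c'. rewrite <- minv_rot, act_minv_l; auto using det_rot. apply Hc.
Qed.

Lemma frame c : isom_line c -> exists N, det N = 1 /\ forall t, act N (c t) = A t.
Proof.
  intros Hc. pose proof (proj1 Hc 0) as H0. destruct (c 0) as [x0 y0] eqn:E0.
  unfold inH in H0; simpl in H0.
  set (c1 := fun t => act (Mi x0 y0) (c t)).
  assert (Hc1 : isom_line c1) by (apply isom_line_act; auto using det_Mi).
  assert (c10 : c1 0 = A 0).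
  { unfold c1. rewrite E0, act_Mi, A0 by auto. f_equal; field; lra. }
  destruct (classify c1 Hc1 c10) as [C [S [HCS Hcl]]].
  exists (mmul (minv (rot C S)) (Mi x0 y0)). split.
  - rewrite det_mmul, det_minv, det_rot, det_Mi; auto; ring.
  - intro t. rewrite act_mmul; [| rewrite det_minv; apply det_rot; auto | apply det_Mi; auto | apply Hc].
    fold (c1 t). rewrite Hcl. apply act_minv_l; auto using det_rot, A_inH.
Qed.

Lemma scaling X : det X = 1 -> (forall t, fst (act X (A t)) = 0) ->
  (forall z, inH z -> act X z <> z) ->
  exists mu, 0 < mu /\ forall x y, act X (x, y) = (mu * x, mu * y).
Proof.
  destruct X as [a b c d]; unfold det; simpl. intros Hd Hax Hfix.
  assert (e1 := Hax 0). assert (e2 := Hax 1). unfold A, act in e1, e2; simpl in e1, e2.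
  rewrite exp_0 in e1.
  assert (ee : 1 < exp 1) by (pose proof (exp_increasing 0 1 ltac:(lra)) as h; rewrite exp_0 in h; lra).
  revert e2 ee. generalize (exp 1). intros e e2 ee.
  assert (n1 : 0 < (c * 0 + d) * ((c * 0 + d) * 1) + c * 1 * (c * 1 * 1)).
  { pose proof (n_pos (Mat a b c d) 0 1). simpl in H. apply H; unfold det; simpl; lra. }
  assert (n2 : 0 < (c * 0 + d) * ((c * 0 + d) * 1) + c * e * (c * e * 1)).
  { pose proof (n_pos (Mat a b c d) 0 e). simpl in H. apply H; unfold det; simpl; lra. }
  assert (f1 : a * c + b * d = 0).
  { assert (h := e1). apply (f_equal (fun r => r * ((c * 0 + d) * ((c * 0 + d) * 1) + c * 1 * (c * 1 * 1)))) in h.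
    unfold Rdiv in h. rewrite Rmult_assoc, Rinv_l in h by lra. lra. }
  assert (f2 : a * c * (e * e) + b * d = 0).
  { assert (h := e2). apply (f_equal (fun r => r * ((c * 0 + d) * ((c * 0 + d) * 1) + c * e * (c * e * 1)))) in h.
    unfold Rdiv in h. rewrite Rmult_assoc, Rinv_l in h by lra. lra. }
  assert (ac0 : a * c = 0) by (assert (a * c * (e * e - 1) = 0) by lra; apply Rmult_integral in H; destruct H as [H|H]; [exact H| assert (e * e > 1) by nra; lra]).
  assert (bd0 : b * d = 0) by lra.
  destruct (Rmult_integral _ _ ac0) as [Ha|Hc].
  - exfalso. subst a. assert (d = 0) by (destruct (Rmult_integral _ _ bd0); auto; subst b; lra). subst d.
    assert (cc : 0 < c * c) by nra.
    set (Y := / Rabs c).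
    assert (Yp : 0 < Y) by (apply Rinv_0_lt_compat; apply Rabs_pos_lt; intro; subst; lra).
    assert (cY : c * Y * (c * Y) = 1).
    { unfold Y. replace (c * / Rabs c * (c * / Rabs c)) with ((c * c) / (Rabs c * Rabs c)) by (field; apply Rabs_no_R0; intro; subst; lra).
      rewrite <- Rabs_mult, (Rabs_right (c*c)) by (left; exact cc). field. intro h; rewrite h in cc; lra. }
    clearbody Y. apply (Hfix (0, Y)); [exact Yp|]. unfold act; simpl.
    replace ((c * 0 + 0) * ((c * 0 + 0) * 1) + c * Y * (c * Y * 1)) with 1 by lra.
    f_equal; [field | replace (0 * 0 - b * c) with 1 by lra; field].
  - subst c. assert (d <> 0) by (intro; subst; lra). assert (b = 0) by (destruct (Rmult_integral _ _ bd0); auto; tauto). subst b.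
    exists (/ (d * d)). split; [apply Rinv_0_lt_compat; nra|].
    intros x y. unfold act; simpl.
    replace (a * d + 0 * 0) with 1 by lra. replace (a * d - 0 * 0) with 1 by lra.
    f_equal; field; auto.
Qed.

Lemma disp_scale mu x y : 0 < mu -> 0 < y -> Rabs (ln mu) <= hdist (x, y) (mu * x, mu * y).
Proof.
  intros Hm Hy. apply hdist_le_Q; [unfold inH; simpl; auto | unfold inH; simpl; apply Rmult_lt_0_compat; auto | apply Rabs_pos |].
  rewrite K_abs. unfold K, Q. rewrite exp_Ropp, exp_ln by auto.
  apply Rminus_le.
  replace (mu + / mu - 2 - ((x - mu * x) ^ 2 + (y - mu * y) ^ 2) / (y * (mu * y)))
    with (- ((1 - mu)^2 * x^2 / (mu * y^2))) by (field; lra).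
  assert (0 <= (1 - mu)^2 * x^2 / (mu * y^2)); [|lra].
  apply Rdiv_le_0_compat; [apply Rmult_le_pos; apply pow2_ge_0 | apply Rmult_lt_0_compat; [auto | apply pow_lt; auto]].
Qed.

Lemma translate c k L :
  isom_line c -> det k = 1 ->
  (forall t, exists t', act k (c t) = c t') ->
  (forall z, inH z -> act k z <> z) ->
  (forall z, inH z -> L <= hdist z (act k z)) ->
  (exists z, inH z /\ hdist z (act k z) = L) ->
  (forall t, act k (c t) = c (t + L)) \/ (forall t, act k (c t) = c (t - L)).
Proof.
  intros Hc Hk Hpres Hnofix Hdisp [z0 [Hz0 HL]].
  destruct (frame c Hc) as [N [HN HNc]].
  assert (HNi : det (minv N) = 1) by (rewrite det_minv; auto).
  assert (cinv : forall t, act (minv N) (A t) = c t) by (intro t; rewrite <- HNc; apply act_minv_l; auto; apply Hc).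
  set (X := mmul N (mmul k (minv N))).
  assert (HX : det X = 1) by (unfold X; rewrite !det_mmul, HN, Hk, HNi; ring).
  assert (actX : forall z, inH z -> act X z = act N (act k (act (minv N) z))).
  { intros z Hz. unfold X. rewrite act_mmul, act_mmul; auto. all: try (apply act_inH; auto).
    rewrite det_mmul, Hk, HNi; ring. }
  assert (Hax : forall t, fst (act X (A t)) = 0).
  { intro t. rewrite actX, cinv by apply A_inH. destruct (Hpres t) as [t' E]. rewrite E, HNc. reflexivity. }
  assert (Hfix : forall z, inH z -> act X z <> z).
  { intros z Hz E. rewrite actX in E by auto.
    apply (Hnofix (act (minv N) z)); [apply act_inH; auto|].
    rewrite <- E at 2. rewrite act_minv_l; auto. apply act_inH; auto. apply act_inH; auto. }
  destruct (scaling X HX Hax Hfix) as [mu [Hmu Hsc]].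
  assert (HXA : forall t, act X (A t) = A (t + ln mu)).
  { intro t. unfold A at 1. rewrite Hsc. unfold A. rewrite exp_plus, exp_ln by auto. f_equal; ring. }
  assert (Hkc : forall t, act k (c t) = c (t + ln mu)).
  { intro t. transitivity (act (minv N) (act X (A t))).
    - rewrite actX by apply A_inH. rewrite cinv. rewrite act_minv_l; auto. apply act_inH; auto. apply Hc.
    - rewrite HXA. apply cinv. }
  assert (B1 : L <= Rabs (ln mu)).
  { pose proof (Hdisp (c 0) (proj1 Hc 0)) as h. rewrite Hkc, (proj2 Hc) in h.
    replace (0 - (0 + ln mu)) with (- ln mu) in h by ring. rewrite Rabs_Ropp in h. exact h. }
  assert (B2 : Rabs (ln mu) <= L).
  { rewrite <- HL, <- (hdist_act N) by (auto; apply act_inH; auto).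
    assert (E : act N (act k z0) = act X (act N z0)) by (rewrite actX, act_minv_l; auto; apply act_inH; auto).
    rewrite E. assert (Hw := act_inH N z0 HN Hz0). destruct (act N z0) as [x y].
    rewrite Hsc. apply disp_scale; auto. }
  assert (Rabs (ln mu) = L) by lra.
  unfold Rabs in H. destruct (Rcase_abs (ln mu)).
  - right. intro t. rewrite Hkc. f_equal. lra.
  - left. intro t. rewrite Hkc. f_equal. lra.
Qed.

Definition B (C S s : R) : pt := act (rot C S) (A s).

Lemma B_coord C S s : C^2 + S^2 = 1 ->
  B C S s = (S * C * (1 - exp s ^ 2) / (C^2 + S^2 * exp s ^ 2), exp s / (C^2 + S^2 * exp s ^ 2)).
Proof.
  intros H. unfold B, act, rot, A; simpl. pose proof (exp_pos s).
  assert (0 < C * C + S * S * (exp s * exp s)).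
  { destruct (Req_dec S 0). subst. simpl in H. nra. assert (0 < S * S) by nra. nra. }
  simpl in H.
  f_equal.
  - field. apply Rgt_not_eq. nra.
  - replace (C * C - S * - S) with 1 by lra. field. apply Rgt_not_eq. nra.
Qed.

Lemma B_inH C S s : C^2 + S^2 = 1 -> inH (B C S s).
Proof. intros. apply act_inH; auto using det_rot, A_inH. Qed.

Lemma Q_AB C S t s : C^2 + S^2 = 1 ->
  Q (A t) (B C S s) = (S^2 * C^2 * (1 - exp s ^ 2)^2 + (exp t * (C^2 + S^2 * exp s ^ 2) - exp s)^2)
                      / (exp t * exp s * (C^2 + S^2 * exp s ^ 2)).
Proof.
  intros H. rewrite B_coord by auto. unfold Q, A.
  pose proof (exp_pos s). pose proof (exp_pos t).
  assert (0 < C^2 + S^2 * exp s ^ 2).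
  { destruct (Req_dec S 0). subst. simpl in *. nra. assert (0 < S * S) by nra. simpl in *. nra. }
  field. repeat split; lra.
Qed.

Lemma key_identity p T Y : 0 < T -> 0 < Y -> 0 < 1 - p + p * Y^2 ->
  let n := 1 - p + p * Y^2 in
  let Q1 := (p * (1 - p) * (1 - Y^2)^2 + (T * n - Y)^2) / (T * Y * n) in
  4 * Q1 + Q1^2 - 4 * p * (1 - p) * (T - / T)^2 =
  (((T + / T) * (Y - / Y) - (T - / T) * (Y + / Y) * (1 - 2 * p)) / 2)^2.
Proof. intros HT HY Hn n Q1. unfold Q1, n. field. repeat split; lra. Qed.

Lemma K_double x : K (2 * x) = 4 * K x + K x ^ 2.
Proof.
  unfold K. replace (2 * x) with (x + x) by ring. replace (- (x + x)) with (- x + - x) by ring.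
  rewrite !exp_plus, !exp_Ropp. pose proof (exp_pos x). field. lra.
Qed.

Lemma K_sq x : K (2 * x) = (exp x - exp (- x))^2.
Proof.
  unfold K. replace (2 * x) with (x + x) by ring. replace (- (x + x)) with (- x + - x) by ring.
  rewrite !exp_plus, !exp_Ropp. pose proof (exp_pos x). field. lra.
Qed.

Lemma K_nonneg x : 0 <= K x.
Proof. replace x with (2 * (x / 2)) by field. rewrite K_sq. apply pow2_ge_0. Qed.

Lemma Q_diag C S l : C^2 + S^2 = 1 -> Q (A l) (B C S l) = S^2 * (exp l - exp (- l))^2.
Proof.
  intros H. rewrite Q_AB by auto. replace (C^2) with (1 - S^2) by lra.
  rewrite exp_Ropp. pose proof (exp_pos l). pose proof (pow2_ge_0 S).
  assert (S^2 <= 1) by (pose proof (pow2_ge_0 C); lra).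
  assert (0 < 1 - S^2 + S^2 * exp l ^ 2).
  { assert (0 < exp l ^ 2) by (apply pow_lt; auto). destruct H1.
    assert (0 < S^2 * exp l ^2) by (apply Rmult_lt_0_compat; auto). lra. rewrite <- H1. lra. }
  field. repeat split; lra.
Qed.

Lemma main_norm C S l eps t s : C^2 + S^2 = 1 -> 1/4 <= C^2 -> 0 < l -> 0 < eps ->
  l <= Rabs t -> hdist (A t) (B C S s) < 2 * eps -> hdist (A l) (B C S l) < 4 * eps.
Proof.
  intros HCS HC Hl He Ht Hd.
  assert (e2 : 0 <= 2 * eps) by lra. assert (e4 : 0 <= 4 * eps) by lra.
  apply (proj1 (hdist_lt_Q _ _ _ (A_inH t) (B_inH C S s HCS) e2)) in Hd.
  apply (proj2 (hdist_lt_Q _ _ _ (A_inH l) (B_inH C S l HCS) e4)).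
  rewrite Q_diag by auto.
  replace (4 * eps) with (2 * (2 * eps)) by ring. rewrite K_double.
  assert (HQ0 : 0 <= Q (A t) (B C S s)) by (rewrite <- hdist_K by auto using A_inH, B_inH; apply K_nonneg).
  assert (Hk0 := K_nonneg (2 * eps)).
  assert (step3 : 4 * Q (A t) (B C S s) + Q (A t) (B C S s) ^ 2 < 4 * K (2 * eps) + K (2 * eps) ^ 2) by nra.
  assert (step2 : 4 * S^2 * C^2 * (exp t - / exp t)^2 <= 4 * Q (A t) (B C S s) + Q (A t) (B C S s) ^ 2).
  { rewrite Q_AB by auto. replace (C^2) with (1 - S^2) by lra.
    pose proof (pow2_ge_0 S). pose proof (pow2_ge_0 C).
    assert (Y0 := exp_pos s).
    assert (0 < 1 - S^2 + S^2 * exp s ^ 2).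
    { assert (0 < exp s ^ 2) by (apply pow_lt; auto). destruct H.
      assert (0 < S^2 * exp s ^2) by (apply Rmult_lt_0_compat; auto). lra. rewrite <- H. lra. }
    pose proof (key_identity (S^2) (exp t) (exp s) (exp_pos t) Y0 H1) as KI. cbv zeta in KI.
    apply Rminus_le.
    replace (4 * S ^ 2 * (1 - S ^ 2) * (exp t - / exp t) ^ 2 -
      (4 * ((S ^ 2 * (1 - S ^ 2) * (1 - exp s ^ 2) ^ 2 + (exp t * (1 - S ^ 2 + S ^ 2 * exp s ^ 2) - exp s) ^ 2) /
       (exp t * exp s * (1 - S ^ 2 + S ^ 2 * exp s ^ 2))) +
       ((S ^ 2 * (1 - S ^ 2) * (1 - exp s ^ 2) ^ 2 + (exp t * (1 - S ^ 2 + S ^ 2 * exp s ^ 2) - exp s) ^ 2) /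
        (exp t * exp s * (1 - S ^ 2 + S ^ 2 * exp s ^ 2))) ^ 2))
    with (- (((exp t + / exp t) * (exp s - / exp s) - (exp t - / exp t) * (exp s + / exp s) * (1 - 2 * S ^ 2)) / 2) ^ 2).
    - pose proof (pow2_ge_0 (((exp t + / exp t) * (exp s - / exp s) - (exp t - / exp t) * (exp s + / exp s) * (1 - 2 * S ^ 2)) / 2)). lra.
    - rewrite <- KI. ring. }
  assert (step1 : S^2 * (exp l - exp (- l))^2 <= 4 * S^2 * C^2 * (exp t - / exp t)^2).
  { rewrite <- exp_Ropp. rewrite <- !K_sq.
    assert (K (2 * l) <= K (2 * t)).
    { rewrite <- (K_abs (2 * t)). rewrite Rabs_mult, (Rabs_right 2) by lra.
      destruct (Req_dec l (Rabs t)). rewrite H; lra. left; apply K_mono; lra. }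
    pose proof (K_nonneg (2 * l)). pose proof (pow2_ge_0 S).
    assert (S^2 * K (2 * l) <= S^2 * K (2 * t)) by (apply Rmult_le_compat_l; auto).
    assert (S^2 * K (2 * t) <= 4 * S^2 * C^2 * K (2 * t)); [|lra].
    pose proof (K_nonneg (2 * t)).
    assert (0 <= S^2 * K (2 * t)) by (apply Rmult_le_pos; auto).
    nra. }
  lra.
Qed.

Lemma Q_sym z w : Q z w = Q w z.
Proof. destruct z as [x y], w as [u v]; unfold Q. f_equal; ring. Qed.
Lemma hdist_sym z w : inH z -> inH w -> hdist z w = hdist w z.
Proof. intros. apply hdist_of_Q; auto using hdist_nonneg. rewrite Q_sym, hdist_K; auto. Qed.

Lemma mmul_assoc X Y Z : mmul X (mmul Y Z) = mmul (mmul X Y) Z.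
Proof. destruct X, Y, Z; unfold mmul; simpl; f_equal; ring. Qed.
Lemma mmul_mid_l X : mmul mid X = X.
Proof. destruct X; unfold mmul, mid; simpl; f_equal; ring. Qed.
Lemma mmul_mid_r X : mmul X mid = X.
Proof. destruct X; unfold mmul, mid; simpl; f_equal; ring. Qed.

Lemma B_neg C S t : C^2 + S^2 = 1 -> B C S (- t) = B (- S) C t.
Proof.
  intros H. unfold B. replace (A (- t)) with (act (rot 0 1) (A t)).
  - rewrite <- act_mmul; auto using A_inH, det_rot. f_equal. unfold mmul, rot; simpl; f_equal; ring.
    unfold det, rot; simpl; ring.
  - unfold A. rewrite act_J by apply exp_pos. rewrite exp_Ropp; auto.
Qed.

Lemma normal_config a b : isom_line a -> isom_line b -> a 0 = b 0 ->
  exists N C S sg, det N = 1 /\ C^2 + S^2 = 1 /\ 1/4 <= C^2 /\ (sg = 1 \/ sg = -1) /\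
    (forall t, act N (a t) = A t) /\ (forall t, act N (b (sg * t)) = B C S t).
Proof.
  intros Ha Hb Hab. destruct (frame a Ha) as [N [HN HNa]].
  set (b' := fun t => act N (b t)).
  assert (Hb' : isom_line b') by (apply isom_line_act; auto).
  assert (b'0 : b' 0 = A 0) by (unfold b'; rewrite <- Hab; auto).
  destruct (classify b' Hb' b'0) as [C [S [HCS Hcl]]].
  destruct (Rle_lt_dec (1/4) (C^2)).
  - exists N, C, S, 1. repeat split; auto. intro t. rewrite Rmult_1_l. apply Hcl.
  - exists N, (- S), C, (-1). repeat split; auto; try lra.
    intro t. rewrite <- B_neg by auto. unfold B. rewrite <- Hcl. unfold b'. f_equal. f_equal. ring.
Qed.

Lemma conj_back h g : det h = 1 -> mmul (minv h) (mmul (mmul h (mmul g (minv h))) h) = g.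
Proof.
  intros Hh. rewrite <- !mmul_assoc, mmul_minv_l, mmul_mid_r by auto.
  rewrite mmul_assoc, mmul_minv_l, mmul_mid_l by auto. reflexivity.
Qed.
Lemma conj_mneg h : det h = 1 -> mmul (minv h) (mmul mneg_id h) = mneg_id.
Proof. destruct h as [a b c d]; unfold det, mmul, minv, mneg_id; simpl; intros; f_equal; lra. Qed.

Lemma conj_translate Gamma g L G c h :
  closed_surface_group Gamma -> Gamma g -> nontrivial g -> transl_length g L ->
  isom_line c -> (forall z, G z <-> exists t, z = c t) -> Gamma h ->
  (forall z, inH z -> (G z <-> G (act (mmul h (mmul g (minv h))) z))) ->
  exists e, Gamma e /\ det e = 1 /\ forall t, act e (c t) = c (t + L).
Proof.
  intros [Hdet [Hmid [Hmul [Hinv [_ [Hfree _]]]]]] Hg [Hg1 Hg2] [TL1 [z0 [Hz0 TL2]]] Hc HG Hh Hinvar.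
  set (k := mmul h (mmul g (minv h))).
  assert (Gk : Gamma k) by (unfold k; auto).
  assert (Hhd := Hdet h Hh). assert (Hgd := Hdet g Hg).
  assert (dk : det k = 1) by (unfold k; rewrite !det_mmul, det_minv, Hhd, Hgd; ring).
  assert (Hhi : det (minv h) = 1) by (rewrite det_minv; auto).
  assert (actk : forall z, inH z -> act k z = act h (act g (act (minv h) z))).
  { intros z Hz. unfold k.
    assert (dgh : det (mmul g (minv h)) = 1) by (rewrite det_mmul, Hgd, Hhi; ring).
    rewrite act_mmul by auto. rewrite act_mmul by auto. reflexivity. }
  assert (ntk : nontrivial k).
  { split; intro E.
    - apply Hg1. rewrite <- (conj_back h g Hhd). fold k. rewrite E, mmul_mid_l, mmul_minv_l; auto.
    - apply Hg2. rewrite <- (conj_back h g Hhd). fold k. rewrite E. apply conj_mneg; auto. }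
  assert (Hdisp : forall z, inH z -> L <= hdist z (act k z)).
  { intros z Hz. rewrite actk by auto.
    rewrite <- (act_minv_r h z) at 1 by auto.
    rewrite hdist_act by (auto; repeat (apply act_inH; auto)). apply TL1. apply act_inH; auto. }
  assert (Hatt : exists z, inH z /\ hdist z (act k z) = L).
  { exists (act h z0). split; [apply act_inH; auto|].
    rewrite actk, act_minv_l, hdist_act; auto. all: try (apply act_inH; auto). }
  assert (Hpres : forall t, exists t', act k (c t) = c t').
  { intro t. assert (G (c t)) by (apply HG; eauto).
    apply Hinvar in H; [|apply Hc]. apply HG in H. destruct H as [t' E]. eauto. }
  destruct (translate c k L Hc dk Hpres (Hfree k Gk ntk) Hdisp Hatt) as [P|M].
  - exists k. auto.
  - exists (minv k). split; [auto|]. split; [rewrite det_minv; auto|].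
    intro t. replace (c t) with (act k (c (t + L))) by (rewrite M; f_equal; ring).
    apply act_minv_l; auto. apply Hc.
Qed.

Lemma K0 : K 0 = 0.
Proof. unfold K. rewrite Ropp_0, exp_0. ring. Qed.
Lemma hdist_refl z : inH z -> hdist z z = 0.
Proof. intros. apply hdist_of_Q; auto; try lra. rewrite K0. destruct z as [x y]; unfold Q, inH in *; simpl in *. field. lra. Qed.

Lemma shift_line c t1 : isom_line c -> isom_line (fun t => c (t + t1)).
Proof. intros [H1 H2]. split; auto. intros s t. rewrite H2. f_equal. ring. Qed.
Lemma sg_line c sg : (sg = 1 \/ sg = -1) -> isom_line c -> isom_line (fun t => c (sg * t)).
Proof. intros Hs [H1 H2]. split; auto. intros s t. rewrite H2.
  replace (sg * s - sg * t) with (sg * (s - t)) by ring. rewrite Rabs_mult.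
  destruct Hs; subst; [rewrite Rabs_R1 | rewrite (Rabs_left (-1)) by lra]; ring. Qed.


Lemma half (Gamma : mat -> Prop) (g : mat) (L : R)
  (alpha beta : pt -> Prop) (p : pt) (eps : R) :
  closed_surface_group Gamma ->
  Gamma g -> nontrivial g ->
  transl_length g L ->
  projects_to Gamma g alpha ->
  projects_to Gamma g beta ->
  (forall q, (alpha q /\ beta q) <-> q = p) ->
  0 < eps ->
  systole_gt Gamma (8 * eps) ->
  seg_length_lt (trap alpha beta eps) (L + 4 * eps).
Proof.
  intros CSG Hg ntg TL [[c1 [Hc1in [Hc1d Hc1G]]] [h1 [Gh1 Inv1]]]
    [[c2 [Hc2in [Hc2d Hc2G]]] [h2 [Gh2 Inv2]]] Hint He Hsys.
  assert (CSG' := CSG). destruct CSG' as [Hdet [Hmid [Hmul [Hinv [_ [Hfree _]]]]]].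
  assert (HL : 8 * eps < L).
  { destruct TL as [_ [z [Hz E]]]. rewrite <- E. apply Hsys; auto. }
  destruct (proj2 (Hint p) eq_refl) as [Hpa Hpb].
  destruct (proj1 (Hc1G p) Hpa) as [t1 Ep1].
  destruct (proj1 (Hc2G p) Hpb) as [t2 Ep2].
  set (a := fun t => c1 (t + t1)).
  set (b := fun t => c2 (t + t2)).
  assert (Ha : isom_line a) by (apply shift_line; split; auto).
  assert (Hb : isom_line b) by (apply shift_line; split; auto).
  assert (a0 : a 0 = p) by (unfold a; rewrite Rplus_0_l; auto).
  assert (b0 : b 0 = p) by (unfold b; rewrite Rplus_0_l; auto).
  destruct (normal_config a b Ha Hb ltac:(congruence)) as [N [C [S [sg [HN [HCS [HC [Hsg [HNa HNb]]]]]]]]].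
  set (b' := fun t => b (sg * t)).
  assert (Hb' : isom_line b') by (apply sg_line; auto).
  assert (HNb' : forall t, act N (b' t) = B C S t) by exact HNb.
  assert (b'0 : b' 0 = p) by (unfold b'; rewrite Rmult_0_r; auto).
  assert (HA : forall z, alpha z <-> exists t, z = a t).
  { intro z. rewrite Hc1G. split; intros [t E]; [exists (t - t1) | exists (t + t1)]; rewrite E; unfold a; f_equal; ring. }
  assert (HB : forall z, beta z <-> exists t, z = b' t).
  { intro z. rewrite Hc2G. split; intros [t E].
    - exists (sg * (t - t2)). rewrite E. unfold b', b. f_equal.
      replace (sg * (sg * (t - t2))) with ((sg * sg) * (t - t2)) by ring.
      replace (sg * sg) with 1 by (destruct Hsg; subst; ring). ring.
    - exists (sg * t + t2). rewrite E. reflexivity. }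
  destruct (conj_translate Gamma g L alpha a h1 CSG Hg ntg TL Ha HA Gh1 Inv1) as [ea [Gea [dea Hea]]].
  destruct (conj_translate Gamma g L beta b' h2 CSG Hg ntg TL Hb' HB Gh2 Inv2) as [eb [Geb [deb Heb]]].
  set (l := L / 2).
  assert (Hl : 0 < l) by (unfold l; lra).
  assert (Hain := proj1 Ha). assert (Hbin := proj1 Hb').
  assert (key : forall t s, hdist (a t) (b' s) < 2 * eps -> Rabs t < l).
  { intros t s Hd. destruct (Rlt_le_dec (Rabs t) l) as [|Hge]; auto. exfalso.
    assert (Hd' : hdist (A t) (B C S s) < 2 * eps).
    { rewrite <- HNa, <- HNb'. rewrite hdist_act; [exact Hd | exact HN | apply Hain | apply (Hbin s)]. }
    assert (Hdl := main_norm C S l eps t s HCS HC Hl He Hge Hd').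
    set (delta := hdist (a l) (b' l)).
    assert (Hdel : delta < 4 * eps) by (unfold delta; rewrite <- hdist_act with (X := N), HNa, HNb'; auto).
    assert (Hdel' : hdist (b' (- l)) (a (- l)) = delta).
    { unfold delta. rewrite hdist_sym by auto.
      rewrite <- hdist_act with (X := N), HNa, HNb' by auto.
      rewrite <- (hdist_act N (a l)), HNa, HNb' by auto.
      apply K_inj; try apply hdist_nonneg; auto using A_inH, B_inH.
      rewrite !hdist_K by auto using A_inH, B_inH. rewrite !Q_diag by auto.
      rewrite Ropp_involutive. ring. }
    set (u := a (- l)).
    set (g' := mmul (minv ea) eb).
    assert (Gg' : Gamma g') by (unfold g'; auto).
    assert (dg' : det g' = 1) by (unfold g'; rewrite det_mmul, det_minv, dea, deb; ring).
    assert (Eg' : forall z, inH z -> act ea (act g' z) = act eb z).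
    { intros z Hz. unfold g'. assert (det (minv ea) = 1) by (rewrite det_minv; auto).
      rewrite act_mmul by auto.
      apply act_minv_r; auto. apply act_inH; auto. }
    assert (Hdisp : hdist u (act g' u) < 8 * eps).
    { rewrite <- (hdist_act ea u (act g' u) dea (Hain _) (act_inH _ _ dg' (Hain _))).
      rewrite Eg' by apply Hain. unfold u. rewrite Hea.
      replace (- l + L) with l by (unfold l; field).
      eapply Rle_lt_trans; [apply hdist_tri with (m := b' l); auto; apply act_inH; auto|].
      replace (b' l) with (act eb (b' (- l))) at 2 by (rewrite Heb; f_equal; unfold l; field).
      rewrite (hdist_act eb (b' (- l)) (a (- l)) deb (Hbin _) (Hain _)). fold delta. rewrite Hdel'. lra. }
    destruct (classic (nontrivial g')) as [ntg'|ntg'].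
    - pose proof (Hsys g' Gg' ntg' u (Hain _)). lra.
    - assert (Hid : forall z, act g' z = z).
      { unfold nontrivial in ntg'. apply not_and_or in ntg'.
        destruct ntg' as [E|E]; apply NNPP in E; rewrite E; intro z; [apply act_mid | apply act_mneg]. }
      assert (EL : a (0 + L) = b' (0 + L)).
      { rewrite <- Hea, <- Heb, a0, b'0, <- Eg', Hid; [reflexivity | rewrite <- a0; apply Hain]. }
      rewrite Rplus_0_l in EL.
      assert (Ep : a L = p).
      { apply Hint. split; [apply HA; eauto | apply HB; rewrite EL; eauto]. }
      pose proof (proj2 Ha L 0) as hd. rewrite Ep, <- a0 in hd at 1. rewrite a0 in hd.
      rewrite hdist_refl in hd by (rewrite <- a0; apply Hain).
      rewrite Rminus_0_r, Rabs_right in hd by lra. lra. }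
  exists L. split; [lra|].
  intros x y [Hx [bx [Hbx Hdx]]] [Hy [by' [Hby Hdy]]].
  apply HA in Hx. apply HA in Hy. apply HB in Hbx. apply HB in Hby.
  destruct Hx as [tx Ex], Hy as [ty Ey], Hbx as [sx Esx], Hby as [sy Esy]. subst.
  pose proof (key tx sx Hdx). pose proof (key ty sy Hdy).
  rewrite (proj2 Ha). unfold l in *.
  apply Rabs_le. apply Rabs_def2 in H. apply Rabs_def2 in H0. lra.
Qed.


Theorem lemma3p1
  (Gamma : mat -> Prop) (g : mat) (Lgamma : R)
  (alpha beta : pt -> Prop) (p : pt) (eps : R) :
  closed_surface_group Gamma ->
  Gamma g -> nontrivial g ->
  transl_length g Lgamma ->
  projects_to Gamma g alpha ->
  projects_to Gamma g beta ->
  (forall q, (alpha q /\ beta q) <-> q = p) ->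
  0 < eps ->
  systole_gt Gamma (8 * eps) ->
  seg_length_lt (trap alpha beta eps) (Lgamma + 4 * eps) /\
  seg_length_lt (trap beta alpha eps) (Lgamma + 4 * eps).
Proof.
  intros. split.
  - eapply half; eauto.
  - eapply half; eauto. intro q. rewrite <- (H5 q). tauto.
Qed.
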